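(* For every $n \geq 1$, every $p=(p_1,\ldots,p_n) \in (0,1)^n$ with $p_1 + \cdots + p_n \leq 1$ and every integer $k \geq 0$, $$\Pr\{T_{n,n}(p) > k\} \geq \Pr\{T_{n,n}(v) > k\} \geq \Pr\{T_{n,n}(u) > k\},$$ where $p_0 = 1 - (p_1 + \cdots + p_n)$, $v=(v_1,\ldots,v_n)$ with $v_i = (1-p_0)/n$, and $u=(1/n,\ldots,1/n)$.
   Context: For a vector $q=(q_1,\ldots,q_n)$ of nonnegative reals with $q_1+\cdots+q_n\le 1$, let $q_0 = 1-(q_1+\cdots+q_n)$; coupons are drawn independently, one at each time $1,2,\ldots$, from $\{0,1,\ldots,n\}$, coupon $i$ with probability $q_i$, and coupon $0$ never belongs to the collection. $T_{n,n}(q)$ is the number of draws needed until all $n$ coupons $1,\ldots,n$ have been drawn at least once. *)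

(* Defs.v *)
From HB Require Import structures.
From mathcomp Require Import all_boot all_order all_algebra.
Set Implicit Arguments. Unset Strict Implicit. Unset Printing Implicit Defensive.
Import Order.TTheory GRing.Theory Num.Theory.
Local Open Scope ring_scope.

(* Coupons are indexed by 'I_n.+1: ord0 is coupon 0 (never in the collection),
   lift ord0 i is coupon i+1 for i : 'I_n. *)
Definition coupon_prob (R : nzRingType) (n : nat) (q : 'I_n -> R) (j : 'I_n.+1) : R :=
  match unlift ord0 j with
  | None => 1 - \sum_(i < n) q i
  | Some i => q i
  end.

(* Pr{T_{n,n}(q) > k}: probability that after the first k independent draws
   some coupon 1..n has not yet been drawn, i.e. the sum over all outcomes
   (f 0, ..., f (k-1)) of the first k draws in which some coupon i is missing. *)
Definition prob_T_gt (R : nzRingType) (n : nat) (q : 'I_n -> R) (k : nat) : R :=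
  \sum_(f : {ffun 'I_k -> 'I_n.+1} |
          [exists i : 'I_n, [forall t : 'I_k, f t != lift ord0 i]])
     \prod_(t < k) coupon_prob q (f t).

(* Main.v *)
Require Import Defs.
From HB Require Import structures.
From mathcomp Require Import all_boot all_order all_algebra.
From mathcomp Require Import ring lra.
Import Order.TTheory GRing.Theory Num.Theory.
Local Open Scope ring_scope.


Definition Pf n k (f : {ffun 'I_k -> 'I_n.+1}) : bool :=
  [exists i : 'I_n, [forall t : 'I_k, f t != lift ord0 i]].
Arguments Pf {n k}.
Definition phiij n (i j x : 'I_n.+1) := if x == j then i else x.
Arguments phiij {n}.
Definition Pg n k (i j : 'I_n.+1) (g : {ffun 'I_k -> 'I_n.+1}) :=
  [exists l : 'I_n, (lift ord0 l != i) && (lift ord0 l != j) && [forall t, g t != lift ord0 l]].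
Arguments Pg {n k}.
Definition S (R : realFieldType) n k (i j : 'I_n.+1) (g : {ffun 'I_k -> 'I_n.+1})
  (Q : pred 'I_n.+1) (w : 'I_n.+1 -> R) :=
  \prod_(t < k) \sum_(x | (phiij i j x == g t) && Q x) w x.

Arguments S {R n k}.

Lemma Pf_decomp n k (i j : 'I_n.+1) (g : {ffun 'I_k -> 'I_n.+1}) (f : {ffun 'I_k -> 'I_n.+1}) :
  i != j -> i != ord0 -> (forall t, phiij i j (f t) = g t) ->
  Pf f = Pg i j g || [forall t, f t != i] || ((j != ord0) && [forall t, f t != j]).
Proof.
move=> ij i0 Hf; apply/idP/idP.
- case/existsP => l /forallP Hl.
  case: (eqVneq (lift ord0 l) i) => [Ei|Ni].
    by apply/orP; left; apply/orP; right; apply/forallP => t; rewrite -Ei; exact: Hl.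
  case: (eqVneq (lift ord0 l) j) => [Ej|Nj].
    apply/orP; right; rewrite -Ej; apply/andP; split; last by apply/forallP.
    by apply: contraNneq (neq_lift ord0 l) => ->.
  apply/orP; left; apply/orP; left; apply/existsP; exists l; rewrite Ni Nj /=.
  apply/forallP => t; rewrite -Hf /phiij; case: (f t =P j) => _; first by rewrite eq_sym.
  exact: Hl.
- case/orP => [/orP[|]|].
  + case/existsP => l /andP[/andP[Ni Nj] /forallP Hl]; apply/existsP; exists l.
    apply/forallP => t; apply: contra (Hl t) => /eqP Eft.
    by rewrite -Hf Eft /phiij (negbTE Nj).
  + move=> /forallP Hi; case: (unliftP ord0 i) => [l Ei|Ei]; last by rewrite Ei eqxx in i0.
    by apply/existsP; exists l; rewrite -Ei; apply/forallP.
  + case/andP => j0 /forallP Hj; case: (unliftP ord0 j) => [l Ej|Ej]; last by rewrite Ej eqxx in j0.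
    by apply/existsP; exists l; rewrite -Ej; apply/forallP.
Qed.

Lemma sum_or (R : realFieldType) (T : finType) (A B : pred T) (F : T -> R) :
  \sum_(x | A x || B x) F x = \sum_(x | A x) F x + \sum_(x | B x) F x - \sum_(x | A x && B x) F x.
Proof.
rewrite big_mkcond [\sum_(x | A x) _]big_mkcond [\sum_(x | B x) _]big_mkcond.
rewrite [\sum_(x | A x && B x) _]big_mkcond -big_split -sumrB /=.
by apply: eq_bigr => x _; case: (A x); case: (B x) => /=; ring.
Qed.

Lemma famE n k (i j : 'I_n.+1) (g : {ffun 'I_k -> 'I_n.+1}) (Q : pred 'I_n.+1) f :
  (f \in family (fun t x => (phiij i j x == g t) && Q x)) =
  [forall t, phiij i j (f t) == g t] && [forall t, Q (f t)].
Proof.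
apply/familyP/andP => [H|[/forallP H1 /forallP H2] t].
  by split; apply/forallP => t; move: (H t); rewrite ?inE => /andP[].
by rewrite unfold_in; apply/andP; split; [exact: H1 | exact: H2].
Qed.

Lemma S_fam (R : realFieldType) n k (i j : 'I_n.+1) (g : {ffun 'I_k -> 'I_n.+1}) Q (w : 'I_n.+1 -> R) :
  S i j g Q w = \sum_(f in family (fun t x => (phiij i j x == g t) && Q x)) \prod_(t<k) w (f t).
Proof. by rewrite /S (bigA_distr_big_dep (fun t x => (phiij i j x == g t) && Q x) (fun t x => w x)). Qed.

Lemma fib_decomp (R : realFieldType) n k (w : 'I_n.+1 -> R) (i j : 'I_n.+1) (g : {ffun 'I_k -> 'I_n.+1}) :
  i != j -> i != ord0 ->
  \sum_(f : {ffun 'I_k -> 'I_n.+1} | Pf f && ([ffun t => phiij i j (f t)] == g)) \prod_(t < k) w (f t) =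
  if Pg i j g then S i j g predT w
  else S i j g (predC1 i) w + (if j != ord0 then S i j g (predC1 j) w - S i j g [pred x | (x != i) && (x != j)] w else 0).
Proof.
move=> ij i0.
have Hfib f : ([ffun t => phiij i j (f t)] == g) = [forall t, phiij i j (f t) == g t].
  apply/eqP/forallP => [<- t|H]; first by rewrite ffunE.
  by apply/ffunP => t; rewrite ffunE; apply/eqP.
rewrite !S_fam.
case: ifP => HPg.
  apply: eq_bigl => f; rewrite famE Hfib.
  case Ef: [forall t, _]; last by rewrite andbF.
  have Hf : forall t, phiij i j (f t) = g t by move=> t; apply/eqP; exact: (forallP Ef t).
  rewrite andbT (@Pf_decomp _ _ _ _ _ _ ij i0 Hf) HPg /=; symmetry; by apply/forallP.
case: ifP => HjR.
  transitivity (\sum_(f | (f \in family (fun t x => (phiij i j x == g t) && predC1 i x))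
                     || (f \in family (fun t x => (phiij i j x == g t) && predC1 j x))) \prod_(t<k) w (f t)).
    apply: eq_bigl => f; rewrite !famE Hfib.
    case Ef: [forall t, _]; last by rewrite andbF.
    have Hf : forall t, phiij i j (f t) = g t by move=> t; apply/eqP; exact: (forallP Ef t).
    by rewrite andbT (@Pf_decomp _ _ _ _ _ _ ij i0 Hf) HPg HjR /=.
  rewrite sum_or addrA; congr (_ - _); apply: eq_bigl => f; rewrite !famE.
  case: [forall t, _ == _] => //=.
  apply/andP/forallP => [[/forallP H1 /forallP H2] t|H].
    by rewrite ?inE /= H1 H2.
  by split; apply/forallP => t; have := H t; rewrite ?inE /= => /andP[].
rewrite addr0; apply: eq_bigl => f; rewrite famE Hfib.
case Ef: [forall t, _]; last by rewrite andbF.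
have Hf : forall t, phiij i j (f t) = g t by move=> t; apply/eqP; exact: (forallP Ef t).
by rewrite andbT (@Pf_decomp _ _ _ _ _ _ ij i0 Hf) HPg HjR /= orbF.
Qed.

Lemma phi_off n (i j x y : 'I_n.+1) : i != j -> y != i -> phiij i j x == y -> (x != i) && (x != j).
Proof.
move=> ij yi; rewrite /phiij; case: (x =P j) => [_ /eqP E|/eqP nj /eqP E].
  by rewrite -E eqxx in yi.
by rewrite -E in yi; rewrite yi.
Qed.

Lemma S_fact (R : realFieldType) n k (i j : 'I_n.+1) (g : {ffun 'I_k -> 'I_n.+1}) (Q : pred 'I_n.+1) (w : 'I_n.+1 -> R) :
  i != j -> (forall x, x != i -> x != j -> Q x) ->
  S i j g Q w = (\sum_(x | (phiij i j x == i) && Q x) w x) ^+ #|[pred t | g t == i]|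
     * \prod_(t | g t != i) \sum_(x | phiij i j x == g t) w x.
Proof.
move=> ij HQ; rewrite /S (bigID (fun t => g t == i)) /=; congr (_ * _).
  rewrite (eq_bigr (fun=> \sum_(x | (phiij i j x == i) && Q x) w x)); last by move=> t /eqP ->.
  by rewrite prodr_const.
apply: eq_bigr => t Ht; apply: eq_bigl => x.
case E: (phiij i j x == g t) => //=.
by have /andP[a b] := @phi_off _ _ _ _ _ ij Ht E; exact: HQ.
Qed.

Lemma K_eq (R : realFieldType) n k (i j : 'I_n.+1) (g : {ffun 'I_k -> 'I_n.+1}) (w w' : 'I_n.+1 -> R) :
  i != j -> (forall x, x != i -> x != j -> w' x = w x) ->
  \prod_(t | g t != i) \sum_(x | phiij i j x == g t) w' x =
  \prod_(t | g t != i) \sum_(x | phiij i j x == g t) w x.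
Proof.
move=> ij H; apply: eq_bigr => t Ht; apply: eq_bigr => x Hx.
by have /andP[a b] := @phi_off _ _ _ _ _ ij Ht Hx; exact: H.
Qed.

Lemma c_val (R : realFieldType) n (w : 'I_n.+1 -> R) (i j : 'I_n.+1) (Q : pred 'I_n.+1) :
  i != j -> \sum_(x | (phiij i j x == i) && Q x) w x =
            (if Q i then w i else 0) + (if Q j then w j else 0).
Proof.
move=> ij; rewrite big_mkcond (bigD1 i) //= (bigD1 j) /=; last by rewrite eq_sym.
rewrite big1 => [|x /andP[xi xj]]; last by rewrite /phiij (negbTE xj) (negbTE xi).
by rewrite /phiij (negbTE ij) !eqxx /= addr0.
Qed.
Lemma pow_spread (R : realFieldType) (p q x y : R) (m : nat) :
  0 <= q -> q <= x -> x <= p -> q <= y -> y <= p -> x + y = p + q ->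
  x ^+ m + y ^+ m <= p ^+ m + q ^+ m.
Proof.
move=> q0 qx xp qy yp e.
have ex : p - x = y - q by lra.
suff: y ^+ m - q ^+ m <= p ^+ m - x ^+ m by lra.
rewrite !subrXX ex; apply: ler_wpM2l; first lra.
apply: ler_sum => i _.
have y0 : 0 <= y by lra. have x0 : 0 <= x by lra.
apply: ler_pM; rewrite ?exprn_ge0 //; apply: lerXn2r; rewrite ?nnegrE //; lra.
Qed.

Definition G (R : realFieldType) n k (w : 'I_n.+1 -> R) :=
  \sum_(f : {ffun 'I_k -> 'I_n.+1} | Pf f) \prod_(t < k) w (f t).
Arguments G {R n} k w.

Lemma step (R : realFieldType) n k (w w' : 'I_n.+1 -> R) (i j : 'I_n.+1) :
  i != j -> i != ord0 -> (forall x, x != i -> x != j -> w' x = w x) ->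
  (forall x, 0 <= w x) -> (forall x, 0 <= w' x) -> w' i + w' j = w i + w j ->
  (if j != ord0 then (w j <= w' i) && (w' i <= w i) else w' j <= w j) ->
  G k w' <= G k w.
Proof.
move=> ij i0 Hww w0 w0' Hs Hsp. rewrite /G.
pose pg := fun f : {ffun 'I_k -> 'I_n.+1} => [ffun t => phiij i j (f t)].
rewrite (partition_big pg predT); last by [].
rewrite [X in _ <= X](partition_big pg predT); last by [].
apply: ler_sum => g _. rewrite /pg !fib_decomp //.
rewrite !S_fact //; try by move=> x a b; rewrite /= ?a ?b.
rewrite (@K_eq _ _ _ _ _ g _ _ ij Hww) !c_val //.
set K := \prod_(t | g t != i) _.
have K0 : 0 <= K by apply: prodr_ge0 => t _; apply: sumr_ge0 => x _.
have ji : j != i by rewrite eq_sym.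
rewrite /= eqxx ji.
case: (Pg i j g); first by rewrite Hs.
rewrite ij !eqxx /=.
case HjR : (j != ord0) in Hsp *.
  case/andP: Hsp => h1 h2.
  have a : w j <= w' j by lra.
  have b : w' j <= w i by lra.
  have H := @pow_spread _ _ _ _ _ #|[pred t | g t == i]| (w0 j) h1 h2 a b Hs.
  rewrite !add0r !addr0; nra.
rewrite !add0r !addr0; apply: ler_wpM2r => //; apply: lerXn2r; rewrite ?nnegrE //.
Qed.



Lemma probG (R : realFieldType) n (q : 'I_n -> R) k : prob_T_gt q k = G k (coupon_prob q).
Proof. by []. Qed.

Lemma cp_lift (R : realFieldType) n (q : 'I_n -> R) l : coupon_prob q (lift ord0 l) = q l.
Proof. by rewrite /coupon_prob liftK. Qed.

Lemma cp_ord0 (R : realFieldType) n (q : 'I_n -> R) : coupon_prob q ord0 = 1 - \sum_(i < n) q i.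
Proof. by rewrite /coupon_prob unlift_none. Qed.

Lemma cp_ge0 (R : realFieldType) n (q : 'I_n -> R) :
  (forall i, 0 <= q i) -> \sum_(i < n) q i <= 1 -> forall x, 0 <= coupon_prob q x.
Proof.
move=> q0 s1 x; case: (unliftP ord0 x) => [l ->|->]; first by rewrite cp_lift.
by rewrite cp_ord0 subr_ge0.
Qed.

Lemma G_ext (R : realFieldType) n k (q q' : 'I_n -> R) :
  (forall l, q l = q' l) -> G k (coupon_prob q) = G k (coupon_prob q').
Proof.
move=> E.
have E' x : coupon_prob q x = coupon_prob q' x.
  case: (unliftP ord0 x) => [l ->|->]; first by rewrite !cp_lift.
  by rewrite !cp_ord0 (eq_bigr _ (fun i _ => E i)).
by apply: eq_bigr => f _; apply: eq_bigr => t _; rewrite E'.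
Qed.

Lemma sum1 (R : realFieldType) n (q q' : 'I_n -> R) i :
  (forall l, l != i -> q' l = q l) -> \sum_(l < n) q' l - \sum_(l < n) q l = q' i - q i.
Proof.
move=> H; rewrite (bigD1 i) // [X in _ - X](bigD1 i) //=.
rewrite (eq_bigr _ (fun l Hl => H l Hl)); ring.
Qed.

Lemma sum2 (R : realFieldType) n (q q' : 'I_n -> R) i j : i != j ->
  (forall l, l != i -> l != j -> q' l = q l) -> q' i + q' j = q i + q j ->
  \sum_(l < n) q' l = \sum_(l < n) q l.
Proof.
move=> ij H Hs; rewrite (bigD1 i) // [RHS](bigD1 i) //= (bigD1 j) 1?eq_sym //=.
rewrite [X in _ = _ + X](bigD1 j) 1?eq_sym //=.
rewrite (eq_bigr (fun l => q l)); last by move=> l /andP[a b]; apply: H.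
rewrite !addrA Hs //.
Qed.


Lemma lift_neq0 n (l : 'I_n) : lift ord0 l != ord0.
Proof. by apply: contraNneq (neq_lift ord0 l) => ->. Qed.

Lemma lift0_eq n (a b : 'I_n) : (lift ord0 a == lift ord0 b) = (a == b).
Proof. by apply/eqP/eqP => [H|->//]; exact: lift_inj H. Qed.

Lemma part1 (R : realFieldType) n k (s : R) : (0 < n)%N -> s <= 1 ->
  forall N (q : 'I_n -> R), (forall l, 0 <= q l) -> \sum_(l < n) q l = s ->
  (#|[pred l | q l != s / n%:R]| <= N)%N ->
  G k (coupon_prob (fun _ : 'I_n => s / n%:R)) <= G k (coupon_prob q).
Proof.
move=> n0 s1; set m := s / n%:R.
have Hsum : \sum_(l < n) m = s.
  by rewrite sumr_const card_ord -mulr_natr divfK // pnatr_eq0 -lt0n.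
elim=> [|N IH] q q0 qs HN.
  have E l : m = q l.
    apply/eqP; rewrite eq_sym; apply/negPn/negP => H.
    by move: HN; rewrite leqn0 => /eqP/card0_eq/(_ l); rewrite inE /= H.
  by rewrite (@G_ext _ _ k _ _ E).
case: (boolP [exists l, q l != m]); last first.
  move/existsPn => H.
  have E l : m = q l by apply/eqP; rewrite eq_sym; apply/negPn/H.
  by rewrite (@G_ext _ _ k _ _ E).
case/existsP => l0 Hl0.
have [i Hi] : exists i, m < q i.
  case: (boolP [exists i, m < q i]) => [/existsP //|/existsPn H].
  exfalso.
  have Hle l : q l <= m by rewrite leNgt; apply: H.
  have Hlt : q l0 < m by rewrite lt_neqAle Hl0 Hle.
  have : \sum_(l < n) q l < \sum_(l < n) m.
    rewrite (bigD1 l0) // [X in _ < X](bigD1 l0) //=.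
    by apply: ltr_leD => //; apply: ler_sum => l _; apply: Hle.
  by rewrite qs Hsum ltxx.
have [j Hj] : exists j, q j < m.
  case: (boolP [exists j, q j < m]) => [/existsP //|/existsPn H].
  exfalso.
  have Hle l : m <= q l by rewrite leNgt; apply: H.
  have Hlt : m < q l0 by rewrite lt_neqAle eq_sym Hl0 Hle.
  have : \sum_(l < n) m < \sum_(l < n) q l.
    rewrite (bigD1 l0) // [X in _ < X](bigD1 l0) //=.
    by apply: ltr_leD => //; apply: ler_sum => l _; apply: Hle.
  by rewrite qs Hsum ltxx.
have ij : i != j by apply/eqP => E; rewrite E in Hi; lra.
pose q' := fun l => if l == i then m else if l == j then q i + q j - m else q l.
have q'i : q' i = m by rewrite /q' eqxx.
have q'j : q' j = q i + q j - m.
  have ji : j != i by rewrite eq_sym.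
  by rewrite /q' eqxx (negbTE ji).
have q'o l : l != i -> l != j -> q' l = q l by move=> a b; rewrite /q' (negbTE a) (negbTE b).
have q'0 l : 0 <= q' l.
  have := q0 j; have := q0 i; have := q0 l.
  rewrite /q'; case: (l == i); first by lra.
  by case: (l == j) => //; lra.
have qs' : \sum_(l < n) q' l = s.
  by rewrite -qs (@sum2 _ _ _ _ _ _ ij q'o) // q'i q'j; ring.
apply: (le_trans (IH q' q'0 qs' _)).
  rewrite -ltnS; apply: leq_trans HN; apply: proper_card; apply/properP; split.
    apply/subsetP => l; rewrite !inE.
    case: (eqVneq l i) => [->|li]; first by rewrite q'i eqxx.
    case: (eqVneq l j) => [->|lj] H; first by rewrite lt_eqF.
    by rewrite -q'o.
  by exists i; rewrite !inE ?q'i ?eqxx // gt_eqF.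
apply: (@step _ _ _ _ _ (lift ord0 i) (lift ord0 j)).
- by rewrite lift0_eq.
- exact: lift_neq0.
- move=> x; case: (unliftP ord0 x) => [l ->|-> _ _].
    rewrite !lift0_eq => a b; by rewrite !cp_lift q'o.
  by rewrite !cp_ord0 qs qs'.
- by apply: cp_ge0 => //; rewrite qs.
- by apply: cp_ge0 => //; rewrite qs'.
- by rewrite !cp_lift q'i q'j; ring.
- by rewrite lift_neq0 !cp_lift q'i; apply/andP; split; apply: ltW.
Qed.


Lemma part2 (R : realFieldType) n k (s : R) : (0 < n)%N -> 0 <= s -> s <= 1 ->
  G k (coupon_prob (fun _ : 'I_n => 1 / n%:R)) <= G k (coupon_prob (fun _ : 'I_n => s / n%:R)).
Proof.
move=> n0 s0 s1.
have nR : 0 < n%:R :> R by rewrite ltr0n.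
have mu : s / n%:R <= 1 / n%:R by apply: ler_wpM2r => //; rewrite invr_ge0 ltW.
have nR' : 0 <= n%:R :> R by apply: ltW.
have m0 : 0 <= s / n%:R by exact: (divr_ge0 s0 nR').
have u0 : 0 <= 1 / n%:R :> R by exact: (divr_ge0 ler01 nR').
have Hu : \sum_(l < n) (1 / n%:R : R) = 1.
  by rewrite sumr_const card_ord -(mulr_natr (1 / n%:R)) divfK // pnatr_eq0 -lt0n.
pose qr (r : nat) := fun l : 'I_n => if (l < r)%N then 1 / n%:R else s / n%:R.
have qr0 r l : 0 <= qr r l by rewrite /qr; case: ifP.
have qrle r l : qr r l <= 1 / n%:R by rewrite /qr; case: ifP.
have qrs r : \sum_(l < n) qr r l <= 1 by rewrite -Hu; apply: ler_sum => l _.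
suff H : forall r, (r <= n)%N -> G k (coupon_prob (qr r)) <= G k (coupon_prob (qr 0%N)).
  have E1 l : (fun _ : 'I_n => 1 / n%:R) l = qr n l by rewrite /qr ltn_ord.
  have E2 l : (fun _ : 'I_n => s / n%:R) l = qr 0%N l by [].
  by rewrite (@G_ext _ _ k _ _ E1) (@G_ext _ _ k _ _ E2); apply: H.
elim=> [|r IH] rn; first by [].
apply: le_trans (IH (ltnW rn)).
pose i := Ordinal rn.
have qo l : l != i -> qr r.+1 l = qr r l.
  move=> li; rewrite /qr ltnS leq_eqVlt.
  suff -> : (nat_of_ord l == r) = false by [].
  by apply/negbTE; apply: contra li => /eqP E; apply/eqP/val_inj.
have qi1 : qr r.+1 i = 1 / n%:R by rewrite /qr /= ltnSn.
have qi0 : qr r i = s / n%:R by rewrite /qr /= ltnn.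
have Hd := @sum1 _ _ (qr r) (qr r.+1) i qo.
apply: (@step _ _ _ _ _ (lift ord0 i) ord0).
- exact: lift_neq0.
- exact: lift_neq0.
- move=> x; case: (unliftP ord0 x) => [l ->|->]; last by rewrite eqxx.
  rewrite lift0_eq => a _; by rewrite !cp_lift qo.
- by apply: cp_ge0.
- by apply: cp_ge0.
- rewrite !cp_lift !cp_ord0; lra.
- rewrite eqxx /= !cp_ord0; suff : \sum_(l < n) qr r l <= \sum_(l < n) qr r.+1 l by lra.
  apply: ler_sum => l _; rewrite /qr; case: ifP => h; first by rewrite ltnS ltnW.
  by case: ifP.
Qed.

Theorem theorem4 (R : realFieldType) (n : nat) (p : 'I_n -> R) (k : nat) :
  (0 < n)%N ->
  (forall i, 0 < p i < 1) ->
  \sum_(i < n) p i <= 1 ->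
  let p0 := 1 - \sum_(i < n) p i in
  let v := fun _ : 'I_n => (1 - p0) / n%:R in
  let u := fun _ : 'I_n => 1 / n%:R in
  prob_T_gt p k >= prob_T_gt v k /\ prob_T_gt v k >= prob_T_gt u k.
Proof.
move=> n0 hp hs p0 v u.
set s := \sum_(i < n) p i.
have p0' l : 0 <= p l by case/andP: (hp l) => a _; apply: ltW.
have Ev l : v l = (fun _ : 'I_n => s / n%:R) l by rewrite /v /p0 /s; congr (_ / _); ring.
rewrite !probG (@G_ext _ _ k _ _ Ev).
split.
  apply: (@part1 _ _ _ _ n0 hs n) => //.
  by rewrite (leq_trans (max_card _)) ?card_ord.
apply: part2 => //; exact: sumr_ge0.
Qed.
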